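(* Let $(\Gamma,d)=(H,\iota,\sigma,m,d)$ be a $\mathbb{Z}/2\mathbb{Z}$-graded skew Brauer graph and $H'\subseteq H$ stable under $\iota$. Let $\Gamma_d=(H_d,\iota_d,\sigma_d,m_d)$ be the covering of $(\Gamma,d)$ and $H'_d=H'\times\mathbb{Z}/2\mathbb{Z}\subseteq H_d$. Then the covering of the graded skew Brauer graph $\mu^+_{H'}(\Gamma,d)$ is the Brauer graph $\mu^+_{H'_d}(\Gamma_d)$.
   Context: A skew Brauer graph is $\Gamma=(H,\iota,\sigma,m)$ with $H$ finite, $\iota$ an involution (possibly with fixed points; $H_\times$ = fixed points, $H_\circ$ = the rest), $\sigma$ a permutation, $m:H\to\mathbb{Z}_{>0}$ constant on $\sigma$-orbits; no half-edge is fixed by both $\iota$ and $\sigma$. A Brauer graph is a skew Brauer graph with $H_\times=\varnothing$. A grading $d:H\to\mathbb{Z}/2\mathbb{Z}$ is $0$-homogeneous if its sum over each $\sigma$-orbit is $0$; then $(\Gamma,d)$ is a graded skew Brauer graph. Its covering is the Brauer graph $\Gamma_d$ with $H_d=H\times\mathbb{Z}/2\mathbb{Z}$ (elements $h_i$), $\iota_d(h_i)=h_{i+1}$ if $h\in H_\times$ and $(\iota h)_i$ if $h\in H_\circ$, $\sigma_d(h_i)=(\sigma h)_{i+d(h)}$, $m_d(h_i)=m(h)$. Sectors and moves: for $H'$ stable under $\iota$, $(h,r)\in H\times\mathbb{Z}_{\ge0}$ is a sector of elements of $H'$ if $r+1$ is the least $r'\ge0$ with $\sigma^{r'}h\notin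 H'$, maximal if moreover $\sigma^{-1}h\notin H'$. The move of a sector gives $\sigma_{(h,r)}=(h\ \ \sigma^{r+1}h)\circ\sigma\circ(\sigma^rh\ \ \iota\sigma^{r+1}h)$ (applied right to left), $m_{(h,r)}(\sigma^ih)=m(\iota\sigma^{r+1}h)$ for $0\le i\le r$, $m_{(h,r)}=m$ elsewhere; in the graded version also $d_{(h,r)}$, defined with $\epsilon=0$ if $\sigma^{r+1}h\in H_\circ$, $\epsilon=1$ if $\sigma^{r+1}h\in H_\times$: $d_{(h,r)}(\iota\sigma^{r+1}h)=-\sum_{i=0}^rd(\sigma^ih)-\epsilon$; $d_{(h,r)}(\sigma^rh)=d(\iota\sigma^{r+1}h)+d(\sigma^rh)+\epsilon$ if $\iota\sigma^{r+1}h\neq\sigma^{-1}h$, else $\sum_{i=-1}^rd(\sigma^ih)+d(\sigma^rh)+\epsilon$; $d_{(h,r)}(\sigma^{-1}h)=\sum_{i=-1}^rd(\sigma^ih)$ if $\iota\sigma^{r+1}h\ne\sigma^{-1}h$, else $d_{(h,r)}(\iota\sigma^{r+1}h)$; $d_{(h,r)}=d$ elsewhere. The (graded) generalized Kauer move $\mu^+_{H'}$ applies successively the (graded) moves of all maximal sectors of elements of $H'$ (independent of order). The covering of $\mu^+_{H'}(\Gamma,d)$ is formed with respect to its grading $d_{H'}$. *)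

(* Defs.v *)
From HB Require Import structures.
From mathcomp Require Import all_boot all_order all_algebra all_fingroup.
Set Implicit Arguments. Unset Strict Implicit. Unset Printing Implicit Defensive.
Import GRing.Theory.

(* Half-edges form a finite type H; iota : H -> H, sigma : {perm H},
   m : H -> nat, grading d : H -> 'Z_2.  H_x = fixed points of iota. *)

Section Defs.
Variable H : finType.

Local Open Scope ring_scope.

Definition skew_brauer (iota : H -> H) (sigma : {perm H}) (m : H -> nat) : Prop :=
  involutive iota /\
  (forall h, (0 < m h)%N) /\
  (forall h x, x \in porbit sigma h -> m x = m h) /\
  (forall h, ~ (iota h = h /\ sigma h = h)).

Definition zero_homogeneous (sigma : {perm H}) (d : H -> 'Z_2) : Prop :=
  forall h, \sum_(x in porbit sigma h) d x = 0.

Definition graded_skew_brauer iota sigma m d : Prop :=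
  skew_brauer iota sigma m /\ zero_homogeneous sigma d.

Definition iota_stable (iota : H -> H) (Hp : {set H}) : Prop :=
  forall h, h \in Hp -> iota h \in Hp.

Definition is_sector (sigma : {perm H}) (Hp : {set H}) (h : H) (r : nat) : bool :=
  [forall i : 'I_r.+1, (sigma ^+ i)%g h \in Hp] && ((sigma ^+ r.+1)%g h \notin Hp).

Definition is_max_sector sigma Hp h r : bool :=
  is_sector sigma Hp h r && ((sigma^-1)%g h \notin Hp).

(* All maximal sectors, in the canonical enumeration order.  Any sector
   (h, r) satisfies r < #|H| (h, ..., sigma^r h are distinct). *)
Definition max_sectors (sigma : {perm H}) (Hp : {set H}) : seq (H * nat) :=
  [seq (hr.1, val hr.2) |
     hr <- enum [pred hr : H * 'I_#|H| | is_max_sector sigma Hp hr.1 hr.2]].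

Definition move_sigma (iota : H -> H) (sigma : {perm H}) (h : H) (r : nat)
  : {perm H} :=
  (* (h  sigma^{r+1} h) o sigma o (sigma^r h  iota sigma^{r+1} h), right to left;
     in mathcomp, (s * t) x = t (s x). *)
  (tperm ((sigma ^+ r)%g h) (iota ((sigma ^+ r.+1)%g h)) * sigma
     * tperm h ((sigma ^+ r.+1)%g h))%g.

Definition move_m (iota : H -> H) (sigma : {perm H}) (m : H -> nat)
  (h : H) (r : nat) : H -> nat :=
  fun x => if [exists i : 'I_r.+1, x == (sigma ^+ i)%g h]
           then m (iota ((sigma ^+ r.+1)%g h)) else m x.

Definition move_d (iota : H -> H) (sigma : {perm H}) (d : H -> 'Z_2)
  (h : H) (r : nat) : H -> 'Z_2 :=
  let a := (sigma ^+ r.+1)%g h in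
  let b := iota a in
  let last := (sigma ^+ r)%g h in
  let prev := (sigma^-1)%g h in
  let eps : 'Z_2 := if iota a == a then 1 else 0 in
  let sumd := \sum_(i < r.+1) d ((sigma ^+ i)%g h) in
  let db := - sumd - eps in
  fun x =>
    if x == b then db
    else if x == last then
      (if b != prev then d b + d last + eps
       else (d prev + sumd) + d last + eps)
    else if x == prev then
      (if b != prev then d prev + sumd else db)
    else d x.

Definition kauer (iota : H -> H) (Hp : {set H}) (sigma : {perm H}) (m : H -> nat)
  : {perm H} * (H -> nat) :=
  foldl (fun st hr =>
           (move_sigma iota st.1 hr.1 hr.2, move_m iota st.1 st.2 hr.1 hr.2))
        (sigma, m) (max_sectors sigma Hp).

Definition gkauer (iota : H -> H) (Hp : {set H}) (sigma : {perm H}) (m : H -> nat)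
  (d : H -> 'Z_2) : {perm H} * (H -> nat) * (H -> 'Z_2) :=
  foldl (fun st hr =>
           (move_sigma iota st.1.1 hr.1 hr.2,
            move_m iota st.1.1 st.1.2 hr.1 hr.2,
            move_d iota st.1.1 st.2 hr.1 hr.2))
        (sigma, m, d) (max_sectors sigma Hp).

End Defs.

Section Cover.
Variable H : finType.
Local Open Scope ring_scope.

Definition cover_iota (iota : H -> H) (x : H * 'Z_2) : H * 'Z_2 :=
  if iota x.1 == x.1 then (x.1, x.2 + 1) else (iota x.1, x.2).

Definition cover_sigma_fun (sigma : {perm H}) (d : H -> 'Z_2) (x : H * 'Z_2)
  : H * 'Z_2 := (sigma x.1, x.2 + d x.1).

Lemma cover_sigma_inj sigma d : injective (cover_sigma_fun sigma d).
Proof.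
move=> [h i] [h' i'] /eqP; rewrite /cover_sigma_fun /= xpair_eqE.
move=> /andP[/eqP/perm_inj eh /eqP]; subst h' => e.
by rewrite -(addrK (d h) i) e addrK.
Qed.

Definition cover_sigma sigma d : {perm H * 'Z_2} := perm (@cover_sigma_inj sigma d).

Definition cover_m (m : H -> nat) (x : H * 'Z_2) : nat := m x.1.

Definition cover_set (Hp : {set H}) : {set H * 'Z_2} := setX Hp [set: 'Z_2].

End Cover.

(* Main.v *)
Require Import Defs.
From mathcomp Require Import all_boot all_order all_algebra all_fingroup.
Set Implicit Arguments. Unset Strict Implicit. Unset Printing Implicit Defensive.
Import GRing.Theory.

Lemma enum_prodE (T1 T2 : finType) :
  enum {: T1 * T2} = [seq (x,y)| x <- enum T1, y <- enum T2].
Proof. by rewrite [LHS]enumT unlock. Qed.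

Lemma tpermE' (T : finType) (x y z : T) :
  tperm x y z = if z == x then y else if z == y then x else z.
Proof. by case: tpermP => [->|->|/eqP/negbTE-> /eqP/negbTE->]; rewrite ?eqxx //; case: eqP. Qed.

Lemma z2_cases (x : 'Z_2) : x = 0%R \/ x = 1%R.
Proof. case: x => [[|[|k]] Hk]; [left|right|]; try by apply/val_inj. by []. Qed.

Lemma z2_enum : enum 'Z_2 = [:: 0%R; 1%R].
Proof. apply: (inj_map val_inj). by rewrite val_enum_ord. Qed.

Ltac z2 x := case: (z2_cases x) => ->.

Section Basics.
Variable H : finType.
Local Open Scope ring_scope.

Lemma cover_sigmaE (s : {perm H}) d y : cover_sigma s d y = (s y.1, y.2 + d y.1).
Proof. by rewrite permE. Qed.

Lemma iter_cover (s : {perm H}) d i h j :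
  iter i (cover_sigma s d) (h, j) = (iter i s h, j + \sum_(k < i) d (iter k s h)).
Proof.
elim: i => [|i IH]; first by rewrite big_ord0 addr0.
by rewrite iterS IH cover_sigmaE big_ord_recr /= addrA.
Qed.

Lemma iter_cover1 (s : {perm H}) d i y :
  (iter i (cover_sigma s d) y).1 = iter i s y.1.
Proof. by case: y => h j; rewrite iter_cover. Qed.

Lemma cover_inv1 (s : {perm H}) d y :
  (((cover_sigma s d)^-1)%g y).1 = (s^-1)%g y.1.
Proof.
set z := ((cover_sigma s d)^-1)%g y.
have : cover_sigma s d z = y by rewrite permKV.
by rewrite cover_sigmaE => <- /=; rewrite permK.
Qed.

Lemma iter_perm_inj (s : {perm H}) i x y : iter i s x = iter i s y -> x = y.
Proof. by rewrite -!permX; apply: perm_inj. Qed.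

Lemma sector_elim (s : {perm H}) (P : {set H}) h r : is_sector s P h r ->
  (forall i, (i <= r)%N -> iter i s h \in P) /\ iter r.+1 s h \notin P.
Proof.
move/andP=> [/forallP Hi Ho]; split; last by rewrite -permX.
by move=> i Hir; have := Hi (Ordinal (Hir : (i < r.+1)%N)); rewrite permX.
Qed.

Lemma max_sector_elim (s : {perm H}) (P : {set H}) h r : is_max_sector s P h r ->
  [/\ (forall i, (i <= r)%N -> iter i s h \in P), iter r.+1 s h \notin P
    & (s^-1)%g h \notin P].
Proof. by move/andP=> [/sector_elim [] ?? ?]. Qed.

Lemma iter_period (s : {perm H}) h k : iter k s h = h ->
  forall n, iter n s h = iter (n %% k) s h.
Proof.
move=> Hk n; rewrite {1}(divn_eq n k) addnC iterD; congr iter.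
elim: (n %/ k)%N => // q IH; by rewrite mulSn iterD IH Hk.
Qed.

Lemma sector_iter_inj (s : {perm H}) (P : {set H}) h r :
  (forall i, (i <= r)%N -> iter i s h \in P) -> iter r.+1 s h \notin P ->
  forall i j, (i <= r.+1)%N -> (j <= r.+1)%N -> iter i s h = iter j s h -> i = j.
Proof.
move=> Hin Hout.
suff W : forall i j, (i < j)%N -> (j <= r.+1)%N -> iter i s h <> iter j s h.
  move=> i j Hi Hj E; case: (ltngtP i j) => // Hij.
  - by case: (W _ _ Hij Hj E).
  - by case: (W _ _ Hij Hi (esym E)).
move=> i j Hij Hj E.
have Hk : iter (j - i) s h = h.
  apply: (@iter_perm_inj s i); rewrite -iterD addnC subnK ?(ltnW Hij) //.
have := iter_period Hk r.+1.
move=> E2; move: Hout; rewrite E2 Hin //.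
have : (r.+1 %% (j - i) < j - i)%N by rewrite ltn_mod subn_gt0.
move=> H1; rewrite -ltnS; apply: (leq_trans H1).
by apply: leq_trans (leq_subr _ _) Hj.
Qed.

Lemma max_sector_bound (s : {perm H}) (P : {set H}) h r : is_max_sector s P h r -> (r < #|H|)%N.
Proof.
move/max_sector_elim=> [Hin Hout _].
have inj : injective (fun i : 'I_r.+1 => iter i s h).
  move=> i j /(sector_iter_inj Hin Hout) E; apply/val_inj/E.
  - exact: ltnW (ltn_ord i).
  - exact: ltnW (ltn_ord j).
by have := leq_card _ inj; rewrite card_ord.
Qed.

Lemma max_sector_uniq (s : {perm H}) (P : {set H}) h r r' :
  is_max_sector s P h r -> is_max_sector s P h r' -> r = r'.
Proof.
move=> /max_sector_elim [Hin Hout _] /max_sector_elim [Hin' Hout' _].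
case: (ltngtP r r') => // H1.
- by move: Hout; rewrite Hin'.
- by move: Hout'; rewrite Hin.
Qed.

Lemma max_sector_disj (s : {perm H}) (P : {set H}) h1 r1 h2 r2 i j :
  is_max_sector s P h1 r1 -> is_max_sector s P h2 r2 ->
  (i <= r1)%N -> (j <= r2)%N -> iter i s h1 = iter j s h2 -> h1 = h2 /\ r1 = r2.
Proof.
suff W : forall h1 r1 h2 r2 i j,
  is_max_sector s P h1 r1 -> is_max_sector s P h2 r2 ->
  (i <= r1)%N -> (j <= r2)%N -> iter i s h1 = iter j s h2 -> (i <= j)%N -> h1 = h2.
  move=> M1 M2 Hi Hj E.
  have e : h1 = h2.
    case: (leqP i j) => Hij; first exact: (W _ _ _ _ _ _ M1 M2 Hi Hj E).
    by apply: esym; apply: (W _ _ _ _ _ _ M2 M1 Hj Hi (esym E) (ltnW Hij)).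
  subst h2; split => //; exact: max_sector_uniq M1 M2.
move=> {}h1 {}r1 {}h2 {}r2 {}i {}j M1 M2 Hi Hj E Hij.
have E2 : h1 = iter (j - i) s h2.
  apply: (@iter_perm_inj s i); by rewrite -iterD addnC subnK.
case: (j - i)%N E2 (leq_subr i j) => [//|k] E2 Hk.
move: M1 M2 => /max_sector_elim [_ _ Hp] /max_sector_elim [Hin2 _ _].
move: Hp; rewrite E2 iterS permK Hin2 //.
by apply: leq_trans Hj; apply: ltnW.
Qed.

End Basics.
Local Open Scope ring_scope.

Lemma z2_11 : 1 + 1 = 0 :> 'Z_2. Proof. by apply/val_inj. Qed.
Lemma z2_01 : (0 == 1 :> 'Z_2) = false. Proof. by []. Qed.
Lemma z2_10 : (1 == 0 :> 'Z_2) = false. Proof. by []. Qed.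
Ltac z2s := rewrite ?(add0r, addr0, z2_11, z2_01, z2_10, eqxx, andbT, andbF, orbT, orbF) /=.

Ltac fin_uv nuv nvu := do 4 (rewrite ?xpair_eqE; z2s; rewrite ?nvu ?(negbTE nuv); z2s).

Lemma fiber_swap (H : finType) (u v : H) (e0 e1 c : 'Z_2) y : u != v -> e0 != e1 ->
  tperm (u, e0) (v, e0 + c) (tperm (u, e1) (v, e1 + c) y) =
  (tperm u v y.1, y.2 + (if (y.1 == u) || (y.1 == v) then c else 0)).
Proof.
case: y => x j /= nuv ne; rewrite !tpermE'.
have nvu : (v == u) = false by rewrite eq_sym (negbTE nuv).
have [->|nxu] := eqVneq x u.
  by move: ne; z2 j; z2 e0; z2 e1; z2 c; fin_uv nuv nvu.
have [->|nxv] := eqVneq x v.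
  by move: ne; z2 j; z2 e0; z2 e1; z2 c; fin_uv nuv nvu.
rewrite !xpair_eqE (negbTE nxu) (negbTE nxv) /=.
by rewrite !xpair_eqE (negbTE nxu) (negbTE nxv) /= addr0.
Qed.

Lemma move_sigmaE (H : finType) (io : H -> H) (s : {perm H}) h r y :
  move_sigma io s h r y =
  tperm h (iter r.+1 s h) (s (tperm (iter r s h) (io (iter r.+1 s h)) y)).
Proof. by rewrite /move_sigma !permM !permX. Qed.

Lemma z2_neq01 (x : 'Z_2) : (0 + x == 1 + x) = false.
Proof. by z2 x. Qed.
Lemma z2_neq10 (x : 'Z_2) : (1 + x == 0 + x) = false.
Proof. by z2 x. Qed.

Section Local.
Variables (H : finType) (iota : H -> H) (s : {perm H}) (d : H -> 'Z_2)
  (P : {set H}) (h : H) (r : nat).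
Hypotheses (Hinv : involutive iota) (Hst : iota_stable iota P)
  (Hin : forall i, (i <= r)%N -> iter i s h \in P) (Hout : iter r.+1 s h \notin P).

Local Notation cs := (cover_sigma s d).
Local Notation ci := (cover_iota iota).
Local Notation l := (iter r s h).
Local Notation a := (iter r.+1 s h).
Local Notation b := (iota (iter r.+1 s h)).
Local Notation D i := (\sum_(k < i) d (iter k s h)).
Local Notation eps := (if iota (iter r.+1 s h) == iter r.+1 s h then (1 : 'Z_2) else 0).
Local Notation cs1 := (move_sigma ci cs (h, 0) r).

Lemma lP : l \in P. Proof. exact: Hin. Qed.
Lemma hP : h \in P. Proof. exact: (Hin (leq0n r)). Qed.
Lemma bP : b \notin P.
Proof. apply/negP => /Hst; rewrite Hinv; exact/negP. Qed.
Lemma hna : h != a.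
Proof. by apply/eqP => E; move: Hout; rewrite -E hP. Qed.
Lemma lnb : l != b.
Proof. by apply/eqP => E; move: bP; rewrite -E lP. Qed.
Lemma ci_a j : ci (a, j) = (b, j + eps).
Proof. by rewrite /cover_iota /=; case: eqP => [E|_]; rewrite ?E ?addr0. Qed.

Lemma inj_r i j : (i <= r.+1)%N -> (j <= r.+1)%N -> iter i s h = iter j s h -> i = j.
Proof. exact: (@sector_iter_inj H s P h r Hin Hout). Qed.

Lemma cs1E z : cs1 z =
  tperm (h, 0) (a, 0 + D r.+1) (cs (tperm (l, 0 + D r) (b, 0 + D r.+1 + eps) z)).
Proof. by rewrite move_sigmaE !iter_cover ci_a. Qed.

Lemma chain1 i : (i <= r.+1)%N -> iter i cs1 (h, 1) = iter i cs (h, 1).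
Proof.
elim: i => // i IH Hi; rewrite !iterS IH ?(ltnW Hi) // cs1E.
have Hir : (i <= r)%N by [].
rewrite iter_cover.
rewrite (tpermD (x := (l, 0 + D r))); last first.
- rewrite xpair_eqE negb_and; apply/orP; left; apply/eqP => E; move: bP; by rewrite E Hin.
- rewrite xpair_eqE negb_and; case: (eqVneq l (iter i s h)) => [E1|//] /=.
  have ei := inj_r (leqnSn r) (ltnW Hi) E1; subst i.
  by rewrite z2_neq01.
have Ec : cs (iter i s h, 1 + D i) = (iter i.+1 s h, 1 + D i.+1).
  by rewrite -[in LHS]iter_cover -iterS iter_cover.
rewrite Ec tpermD //.
- rewrite xpair_eqE negb_and; case: (eqVneq h (iter i.+1 s h)) => [E1|//] /=.
  by have := inj_r (leq0n _) Hi E1.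
- rewrite xpair_eqE negb_and; case: (eqVneq a (iter i.+1 s h)) => [E1|//] /=.
  have ei := inj_r (leqnn _) Hi E1; case: ei => ei; subst i.
  by rewrite z2_neq01.
Qed.

Lemma Eb j : j + D r.+1 + eps = (j + D r) + (D r + D r.+1 + eps).
Proof. by z2 j; z2 (D r); z2 (D r.+1); case: ifP => _; apply/val_inj. Qed.

Lemma step_sigma y :
  cover_sigma (move_sigma iota s h r) (move_d iota s d h r) y =
  move_sigma ci cs1 (h, 1) r y.
Proof.
have E1 : iter r cs1 (h,1) = (l, 1 + D r) by rewrite chain1 // iter_cover.
have E2 : iter r.+1 cs1 (h,1) = (a, 1 + D r.+1) by rewrite chain1 // iter_cover.
rewrite [RHS]move_sigmaE E1 E2 ci_a cs1E.
rewrite (Eb 0) (Eb 1) fiber_swap; [|exact: hna|by []].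
rewrite cover_sigmaE /= fiber_swap; [|exact: lnb|by rewrite z2_neq01].
rewrite cover_sigmaE move_sigmaE /=.
case: y => x j /=.
congr pair; rewrite -!addrA; congr (j + _).
rewrite /move_d.
have sumX : forall n, \sum_(i < n) d ((s ^+ i)%g h) = \sum_(i < n) d (iter i s h).
  by move=> n; apply: eq_bigr => i _; rewrite permX.
rewrite sumX.
rewrite !permX !iterS big_ord_recr /=.
have sE : forall z w, (s z == s w) = (z == w) by move=> z w; exact: (inj_eq perm_inj).
have sP : forall z, (s z == h) = (z == (s^-1)%g h).
  by move=> z; rewrite -{1}(permKV s h) sE.
have nlb : (iter r s h == iota (s (iter r s h))) = false.
  by apply/negbTE; have := lnb; rewrite iterS.
move: nlb sP; set L := iter r s h; set p := (s^-1)%g h; set Dr := \sum_(k < r) _.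
set A := s L; set B := iota A; set e := (if B == A then _ else _).
move=> nlb sP.
case: (eqVneq x B) => [xB|xb].
  rewrite xB orbT tpermR sE eqxx orbT /=.
  by z2 Dr; z2 (d L); z2 e; apply/val_inj.
rewrite orbF.
case: (eqVneq x L) => [xL|xL].
  rewrite xL tpermL sP sE (eq_sym B L) nlb orbF.
  case: (eqVneq B p) => [Bp|Bp] /=.
    by rewrite -Bp; z2 Dr; z2 (d L); z2 e; z2 (d B); apply/val_inj.
  by z2 Dr; z2 (d L); z2 e; z2 (d B); apply/val_inj.
rewrite tpermD 1?eq_sym // sP sE (negbTE xL) orbF.
case: (eqVneq x p) => [xp|xp] /=.
  by rewrite -xp eq_sym (negbTE xb) add0r.
by rewrite add0r addr0.
Qed.

Lemma step_m (m : H -> nat) y :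
  cover_m (move_m iota s m h r) y =
  move_m ci cs1 (move_m ci cs (cover_m m) (h, 0) r) (h, 1) r y.
Proof.
case: y => x j; rewrite /move_m /cover_m /=.
have Ex1 : [exists i : 'I_r.+1, (x, j) == (cs1 ^+ i)%g (h, 1)] =
           [exists i : 'I_r.+1, (x, j) == (iter i s h, 1 + D i)].
  apply: eq_existsb => i; rewrite permX chain1 ?iter_cover //; exact: ltnW (ltn_ord i).
have Ex0 : forall z, [exists i : 'I_r.+1, z == (cs ^+ i)%g (h, 0)] =
           [exists i : 'I_r.+1, z == (iter i s h, 0 + D i)].
  by move=> z; apply: eq_existsb => i; rewrite permX iter_cover.
have Exb : forall k, [exists i : 'I_r.+1, (b, k) == (iter i s h, 0 + D i)] = false.
  move=> k; apply/negbTE/existsPn => i; rewrite xpair_eqE negb_and; apply/orP; left.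
  apply/eqP => E; move: bP; rewrite E Hin //; exact: (ltn_ord i).
have Eb : [exists i : 'I_r.+1, x == (s ^+ i)%g h] =
   [exists i : 'I_r.+1, (x, j) == (iter i s h, 1 + D i)] ||
   [exists i : 'I_r.+1, (x, j) == (iter i s h, 0 + D i)].
  apply/idP/idP.
  - move/existsP => [i]; rewrite permX => /eqP Ei.
    have : (j == 1 + D i) || (j == 0 + D i) by z2 j; z2 (D i).
    case/orP => Ej; apply/orP; [left|right]; apply/existsP; exists i;
      by rewrite xpair_eqE Ei eqxx.
  - case/orP => /existsP [i]; rewrite xpair_eqE => /andP [/eqP -> _];
      apply/existsP; exists i; by rewrite permX.
rewrite Ex1 Ex0 Eb !permX chain1 // !iter_cover !ci_a Ex0 Exb /=.
by case: [exists i : 'I_r.+1, _ == (iter i s h, 1 + _)].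
Qed.

End Local.
Local Open Scope ring_scope.

Lemma move_m_ext (T : finType) (io : T -> T) (s : {perm T}) (m1 m2 : T -> nat) h r :
  (forall y, m1 y = m2 y) -> forall y, move_m io s m1 h r y = move_m io s m2 h r y.
Proof. by move=> E y; rewrite /move_m !E. Qed.

Lemma is_max_cover (H : finType) (s : {perm H}) d (P : {set H}) h j r :
  is_max_sector (cover_sigma s d) (cover_set P) (h, j) r = is_max_sector s P h r.
Proof.
have E : forall i y, ((cover_sigma s d ^+ i)%g y \in cover_set P) = ((s ^+ i)%g y.1 \in P).
  by move=> i y; rewrite !permX /cover_set !inE iter_cover1 andbT.
rewrite /is_max_sector /is_sector !E /cover_set !inE cover_inv1 andbT /=.
congr (_ && _ && _); apply: eq_forallb => i; move: (E i (h, j)); rewrite /cover_set => ->.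
by [].
Qed.

Definition secs (T : finType) (s : {perm T}) (P : {set T}) (h : T) : seq nat :=
  [seq r <- iota 0 #|T| | is_max_sector s P h r].

Lemma max_sectorsE (T : finType) (s : {perm T}) (P : {set T}) :
  max_sectors s P = flatten [seq [seq (h, r) | r <- secs s P h] | h <- enum T].
Proof.
rewrite /max_sectors {1}/enum_mem -enumT enum_prodE /secs.
elim: (enum T) => //= h l IH.
rewrite filter_cat map_cat IH; congr (_ ++ _).
rewrite filter_map -map_comp -val_enum_ord filter_map -map_comp.
by apply: eq_map => i.
Qed.

Lemma filter_iota_bound (p : pred nat) N M :
  (forall r, p r -> (r < N)%N) -> (N <= M)%N -> filter p (iota 0 M) = filter p (iota 0 N).
Proof.
move=> Hp HNM; rewrite -(subnKC HNM) iotaD filter_cat add0n.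
have -> : filter p (iota N (M - N)) = [::]; last by rewrite cats0.
rewrite -(filter_pred0 (iota N (M - N))); apply: eq_in_filter => x.
rewrite mem_iota => /andP [Hx _] /=; apply/negbTE/negP => /Hp; by rewrite ltnNge Hx.
Qed.

Lemma secs_cover (H : finType) (s : {perm H}) d (P : {set H}) h j :
  secs (cover_sigma s d) (cover_set P) (h, j) = secs s P h.
Proof.
rewrite /secs (eq_filter (fun r => is_max_cover s d P h j r)).
apply: filter_iota_bound; first by move=> r; apply: max_sector_bound.
by rewrite card_prod leq_pmulr // card_ord.
Qed.

Lemma secs_small (T : finType) (s : {perm T}) (P : {set T}) h :
  secs s P h = [::] \/ exists r, secs s P h = [:: r].
Proof.
have U : uniq (secs s P h) by rewrite filter_uniq ?iota_uniq.
have M : forall r, r \in secs s P h -> is_max_sector s P h r.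
  by move=> r; rewrite mem_filter => /andP [].
move: U M; case: (secs s P h) => [|r1 [|r2 t]]; [by left|by right; exists r1|].
move=> U M.
have M2 : r2 \in [:: r1, r2 & t] by rewrite !in_cons eqxx orbT.
have E := max_sector_uniq (M r1 (mem_head _ _)) (M r2 M2).
by move: U; rewrite E /= mem_head.
Qed.

Definition pairup (H : finType) (hr : H * nat) : seq ((H * 'Z_2) * nat) :=
  [:: ((hr.1, 0), hr.2); ((hr.1, 1), hr.2)].

Lemma cover_sectors (H : finType) (s : {perm H}) d (P : {set H}) :
  max_sectors (cover_sigma s d) (cover_set P) = flatten (map (@pairup H) (max_sectors s P)).
Proof.
rewrite !max_sectorsE enum_prodE z2_enum.
elim: (enum H) => //= h l IH.
rewrite IH map_cat flatten_cat !secs_cover catA; congr (_ ++ _).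
by case: (secs_small s P h) => [->|[r ->]].
Qed.

Section Global.
Variables (H : finType) (iota : H -> H) (s0 : {perm H}) (P : {set H}).
Hypotheses (Hinv : involutive iota) (Hst : iota_stable iota P).

Lemma sim (L2 : seq (H * nat)) (s : {perm H}) (m : H -> nat) (d : H -> 'Z_2)
  (cs : {perm H * 'Z_2}) (cm : H * 'Z_2 -> nat) :
  (forall hr, hr \in L2 -> is_max_sector s0 P hr.1 hr.2) -> uniq L2 ->
  (forall hr i, hr \in L2 -> (i <= hr.2)%N -> s (iter i s0 hr.1) = s0 (iter i s0 hr.1)) ->
  cs = cover_sigma s d -> (forall y, cm y = cover_m m y) ->
  let G := foldl (fun st hr =>
           (move_sigma iota st.1.1 hr.1 hr.2,
            move_m iota st.1.1 st.1.2 hr.1 hr.2,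
            move_d iota st.1.1 st.2 hr.1 hr.2)) (s, m, d) L2 in
  let B := foldl (fun st hr =>
           (move_sigma (cover_iota iota) st.1 hr.1 hr.2,
            move_m (cover_iota iota) st.1 st.2 hr.1 hr.2))
           (cs, cm) (flatten (map (@pairup H) L2)) in
  (forall y, cover_sigma G.1.1 G.2 y = B.1 y) /\ (forall y, cover_m G.1.2 y = B.2 y).
Proof.
elim: L2 s m d cs cm => [|[h r] L2 IH] s m d cs cm HL Hu Hag Hcs Hcm /=.
  by split => y; rewrite ?Hcs ?Hcm.
have Mh : is_max_sector s0 P h r by apply: (HL (h, r)); rewrite mem_head.
have [Hin0 Hout0 Hp0] := max_sector_elim Mh.
have Hch : forall i, (i <= r.+1)%N -> iter i s h = iter i s0 h.
  elim=> // i IHi Hi; rewrite !iterS IHi ?(ltnW Hi) //.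
  by apply: (Hag (h, r)); rewrite ?mem_head.
have Hin : forall i, (i <= r)%N -> iter i s h \in P.
  by move=> i Hi; rewrite Hch ?Hin0 // (leq_trans Hi).
have Hout : iter r.+1 s h \notin P by rewrite Hch.
move: Hu => /= /andP [hrL Hu].
subst cs.
apply: IH => //.
- by move=> hr Hhr; apply: HL; rewrite in_cons Hhr orbT.
- move=> [h2 r2] i Hhr /= Hi.
  have M2 : is_max_sector s0 P h2 r2 by apply: (HL (h2, r2)); rewrite in_cons Hhr orbT.
  have [Hin2 _ _] := max_sector_elim M2.
  have xl : iter i s0 h2 != iter r s h.
    apply/eqP; rewrite Hch // => E.
    have [e1 e2] := max_sector_disj M2 Mh Hi (leqnn r) E; subst h2 r2.
    by move: hrL; rewrite Hhr.
  rewrite move_sigmaE (@tpermD _ (iter r s h) _ (iter i s0 h2)); first last.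
  + apply/eqP => E; have := bP Hinv Hst Hout; rewrite E Hin2 //.
  + by rewrite eq_sym.
  rewrite (Hag (h2, r2)) ?in_cons ?Hhr ?orbT // tpermD //.
  + apply/eqP => /= E; move: Hp0; rewrite E permK Hin2 //.
  + apply/eqP; rewrite Hch // iterS => /= E; move: xl; by rewrite Hch // (perm_inj E) eqxx.
- apply/permP => y; by rewrite (step_sigma d Hinv Hst Hin Hout).
- move=> y; rewrite (step_m d Hinv Hst Hin Hout).
  apply: move_m_ext => z; apply: move_m_ext => w; exact: Hcm.
Qed.

End Global.

Theorem proposition3p18 (H : finType) (iota : H -> H) (sigma : {perm H})
  (m : H -> nat) (d : H -> 'Z_2) (Hp : {set H}) :
  graded_skew_brauer iota sigma m d ->
  iota_stable iota Hp ->
  let G := gkauer iota Hp sigma m d in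
  let B := kauer (cover_iota iota) (cover_set Hp)
             (cover_sigma sigma d) (cover_m m) in
  (forall x, cover_sigma G.1.1 G.2 x = B.1 x) /\
  (forall x, cover_m G.1.2 x = B.2 x).
Proof.
move=> [[Hinv _] _] Hst G B; rewrite /G /B /gkauer /kauer cover_sectors.
apply: (@sim H iota sigma Hp Hinv Hst) => //.
- move=> hr /mapP [[h i]]; rewrite mem_enum => Hm -> /=; exact: Hm.
- rewrite map_inj_uniq ?enum_uniq // => [[h1 i1] [h2 i2]] /= [-> /val_inj ->] //.
Qed.
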